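(* Let $n$ be a positive even integer and let $a_1,\dots,a_n$ be positive integers. Let $1\le m\le n$ and write $m=2l+r_0$ with $r_0\in\{0,1\}$. For integers $i$ with $r_0\le i\le \frac{n-m+r_0}{2}$ define $$\Gamma_n(m,i)=\sum_{j=0}^{\min\{m-1,\,2i-r_0\}}(-1)^j\,\gamma_n(m-1-j)\,\gamma_{2i-r_0}(j).$$ Then $$\gamma_n(m)=\sum_{i=r_0}^{\frac{n-m+r_0}{2}}a_{2i+1-r_0}\,\Gamma_n(m,i).$$
   Context: For $k\ge1$ and $1\le l\le k$, $I_{k,l}$ is the set of strictly increasing sequences $(t_1,\dots,t_l)$ in $\{1,\dots,k\}$ with $t_i\equiv k+i-l\pmod2$ for all $i$. For $0\le k\le n$ and $1\le l\le k$ define $\gamma_k(l)=\sum_{(t_1,\dots,t_l)\in I_{k,l}}a_{t_1}\cdots a_{t_l}$. Set $\gamma_k(0)=1$ for all $k\ge0$, including $k=0$. *)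

(* Defs.v *)
From HB Require Import structures.
From mathcomp Require Import all_boot all_order all_algebra.
Set Implicit Arguments. Unset Strict Implicit. Unset Printing Implicit Defensive.
Import Order.TTheory GRing.Theory Num.Theory.

(* A sequence is a function 'I_l -> 'I_(k.+1);
   position i : 'I_l stands for the index i+1.  The congruence
   t_i = k + i - l (mod 2) is written t_i + l = k + i (mod 2) to avoid
   truncated subtraction. *)
Definition Iset (k l : nat) : {set {ffun 'I_l -> 'I_k.+1}} :=
  [set t : {ffun 'I_l -> 'I_k.+1} |
     [forall i : 'I_l, (0 < t i)%N && (t i + l == k + i.+1 %[mod 2])] &&
     [forall i : 'I_l, forall j : 'I_l, (i < j)%N ==> (t i < t j)%N]].

(* gamma_k(l) = sum over I_{k,l} of a_{t_1} ... a_{t_l}.  For l = 0 the set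
   contains exactly the empty sequence, so gamma_k(0) = 1 (also for k = 0). *)
Definition gamma (a : nat -> int) (k l : nat) : int :=
  (\sum_(t in Iset k l) \prod_(i < l) a (t i))%R.

Definition Gamma (a : nat -> int) (n m r0 i : nat) : int :=
  (\sum_(0 <= j < (minn (m - 1) (2 * i - r0)).+1)
     (-1) ^+ j * gamma a n (m - 1 - j) * gamma a (2 * i - r0) j)%R.

(* Main.v *)
Require Import Defs.
From HB Require Import structures.
From mathcomp Require Import all_boot all_order all_algebra.
From mathcomp Require Import zify ring lra.
Import Order.TTheory GRing.Theory Num.Theory.
Set Implicit Arguments. Unset Strict Implicit. Unset Printing Implicit Defensive.

Lemma IsetP k l (t : {ffun 'I_l -> 'I_k.+1}) :
  reflect ((forall i : 'I_l, 0 < t i /\ (t i + l) %% 2 = (k + i.+1) %% 2) /\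
           (forall i j : 'I_l, i < j -> t i < t j)) (t \in Iset k l).
Proof.
rewrite inE; apply: (iffP andP) => [[/forallP H1 /forallP H2]|[H1 H2]]; split.
- by move=> i; case/andP: (H1 i) => -> /eqP.
- by move=> i j; move/forallP: (H2 i) => /(_ j) /implyP.
- by apply/forallP => i; case: (H1 i) => -> ->; rewrite eqxx.
- by apply/forallP => i; apply/forallP => j; apply/implyP; apply: H2.
Qed.




Definition extA k l (t : {ffun 'I_l -> 'I_k.+1}) : {ffun 'I_l.+1 -> 'I_k.+2} :=
  [ffun i => if unlift ord_max i is Some j then widen_ord (leqnSn _) (t j) else ord_max].
Definition resA k l (t : {ffun 'I_l.+1 -> 'I_k.+2}) : {ffun 'I_l -> 'I_k.+1} :=
  [ffun j => inord (t (lift ord_max j))].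

Lemma extA_max k l t : @extA k l t ord_max = ord_max.
Proof. by rewrite ffunE unlift_none. Qed.
Lemma extA_lift k l t j : @extA k l t (lift ord_max j) = widen_ord (leqnSn _) (t j).
Proof. by rewrite ffunE liftK. Qed.

Lemma ord_split l (i : 'I_l.+1) : i = ord_max \/ exists j, i = lift ord_max j.
Proof. by case: (unliftP ord_max i) => [j ->|->]; [right; exists j|left]. Qed.

Lemma extA_in k l t : (@extA k l t \in Iset k.+1 l.+1) = (t \in Iset k l).
Proof.
apply/IsetP/IsetP => [[H1 H2]|[H1 H2]]; split.
- move=> i; case: (H1 (lift ord_max i)); rewrite extA_lift ?lift_max /=; lia.
- move=> i j Hij; have := H2 (lift ord_max i) (lift ord_max j).
  rewrite !extA_lift ?lift_max /=; apply; exact Hij.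
- move=> i; case: (ord_split i) => [->|[j ->]].
    rewrite extA_max /=; lia.
  rewrite extA_lift ?lift_max /=; case: (H1 j); lia.
- move=> i j; case: (ord_split i) => [->|[i' ->]].
    move=> Hj; have := ltn_ord j; rewrite /= in Hj; lia.
  case: (ord_split j) => [->|[j' ->]]; rewrite !extA_lift ?extA_max ?lift_max /=.
    by move=> _; apply: ltn_ord.
  exact: H2.
Qed.

Lemma resA_extA k l t : resA (@extA k l t) = t.
Proof. by apply/ffunP => j; rewrite ffunE extA_lift; apply: val_inj; rewrite /= inordK. Qed.

Lemma extA_resA k l t : t \in Iset k.+1 l.+1 -> t ord_max == ord_max -> extA (@resA k l t) = t.
Proof.
move=> /IsetP [H1 H2] /eqP Hm; apply/ffunP => i; case: (ord_split i) => [->|[j ->]].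
  by rewrite extA_max Hm.
rewrite extA_lift ffunE; apply: val_inj => /=; rewrite inordK //.
have := H2 (lift ord_max j) ord_max; rewrite Hm ?lift_max /=; apply; exact: ltn_ord.
Qed.

Lemma partA (a : nat -> int) k l :
  (\sum_(t in Iset k.+1 l.+1 | t ord_max == ord_max) \prod_(i < l.+1) a (t i) =
   a k.+1 * gamma a k l)%R.
Proof.
rewrite (reindex_onto (@extA k l) (@resA k l)); last first.
  by move=> t /andP[H1 H2]; apply: extA_resA.
rewrite /gamma mulr_sumr; apply: eq_big => t.
  by rewrite extA_in extA_max eqxx resA_extA eqxx !andbT.
move=> _; rewrite big_ord_recr /= extA_max mulrC; congr (_ * _)%R.
apply: eq_bigr => i _.
have -> : widen_ord (leqnSn l) i = lift ord_max i by apply/val_inj; rewrite [RHS]lift_max.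
by rewrite extA_lift.
Qed.

Definition extB k L (t : {ffun 'I_L -> 'I_k.+1}) : {ffun 'I_L -> 'I_k.+3} :=
  [ffun i => widen_ord (leq_trans (leqnSn _) (leqnSn _)) (t i)].
Definition resB k L (t : {ffun 'I_L -> 'I_k.+3}) : {ffun 'I_L -> 'I_k.+1} :=
  [ffun i => inord (t i)].

Lemma extB_in k l t :
  (@extB k l.+1 t \in Iset k.+2 l.+1) && (extB t ord_max != ord_max) = (t \in Iset k l.+1).
Proof.
apply/andP/IsetP => [[/IsetP [H1 H2] _]|[H1 H2]]; first split.
- move=> i; case: (H1 i); rewrite ffunE /=; lia.
- move=> i j /H2; by rewrite !ffunE.
- split; first (apply/IsetP; split).
  + move=> i; case: (H1 i); rewrite ffunE /=; lia.
  + move=> i j /H2; by rewrite !ffunE.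
  + rewrite ffunE; apply/eqP => /(congr1 val) /=; have := ltn_ord (t ord_max); lia.
Qed.

Lemma resB_extB k L t : resB (@extB k L t) = t.
Proof. by apply/ffunP => j; rewrite !ffunE; apply: val_inj; rewrite /= inordK. Qed.

Lemma extB_resB k l t : t \in Iset k.+2 l.+1 -> t ord_max != ord_max -> extB (@resB k l.+1 t) = t.
Proof.
move=> /IsetP [H1 H2] Hm; apply/ffunP => i; rewrite !ffunE; apply: val_inj => /=.
have Hmax : t ord_max <= k.
  case: (H1 ord_max) => _; have := ltn_ord (t ord_max).
  have : val (t ord_max) != k.+2 by apply: contra Hm => /eqP Hv; apply/eqP/val_inj.
  rewrite /=; lia.
have Hi : t i <= t ord_max.
  case: (ord_split i) => [->//|[j ->]].
  by apply: ltnW; apply: H2; rewrite [X in X < _]lift_max; apply: ltn_ord.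
by rewrite inordK //; apply: (leq_ltn_trans Hi); rewrite ltnS.
Qed.

Lemma partB (a : nat -> int) k l :
  (\sum_(t in Iset k.+2 l.+1 | t ord_max != ord_max) \prod_(i < l.+1) a (t i) =
   gamma a k l.+1)%R.
Proof.
rewrite (reindex_onto (@extB k l.+1) (@resB k l.+1)); last first.
  by move=> t /andP[H1 H2]; apply: extB_resB.
rewrite /gamma; apply: eq_big => t.
  by rewrite extB_in resB_extB eqxx andbT.
by move=> _; apply: eq_bigr => i _; rewrite ffunE.
Qed.

Lemma partB0 (a : nat -> int) l :
  (\sum_(t in Iset 1 l.+1 | t ord_max != ord_max) \prod_(i < l.+1) a (t i) = 0)%R.
Proof.
apply: big1 => t /andP[/IsetP [H1 _] Hm]; exfalso; move: Hm; case: (H1 ord_max) => H _.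
have := ltn_ord (t ord_max) => H'.
have : val (t ord_max) = 1 by apply/eqP; rewrite eqn_leq -ltnS ltn_ord.
by move=> Hv; rewrite (_ : t ord_max = ord_max) ?eqxx //; apply: val_inj.
Qed.

Lemma gamma_rec (a : nat -> int) k l :
  gamma a k.+2 l.+1 = (a k.+2 * gamma a k.+1 l + gamma a k l.+1)%R.
Proof. by rewrite {1}/gamma (bigID (fun t : {ffun 'I_l.+1 -> 'I_k.+3} => t ord_max == ord_max)) /= partA partB. Qed.

Lemma gamma_rec1 (a : nat -> int) l :
  gamma a 1 l.+1 = (a 1 * gamma a 0 l)%R.
Proof. by rewrite {1}/gamma (bigID (fun t : {ffun 'I_l.+1 -> 'I_2} => t ord_max == ord_max)) /= partA partB0 addr0. Qed.


Section P.
Variable a : nat -> int.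
Local Open Scope ring_scope.

Lemma gamma_l0 k : gamma a k 0 = 1.
Proof.
rewrite /gamma (eq_bigl (pred1 [ffun i : 'I_0 => (ord0 : 'I_k.+1)])).
  by rewrite big_pred1_eq big_ord0.
move=> t /=; apply/IsetP/eqP => [_|_]; first by apply/ffunP => -[].
by split=> -[].
Qed.

Lemma gamma_0l l : gamma a 0 l.+1 = 0.
Proof.
apply: big1 => t /IsetP [H1 _]; case: (H1 ord0) => H _.
by move: H; have := ltn_ord (t ord0); case: (nat_of_ord (t ord0)).
Qed.

Lemma gamma_gt k l : (k < l)%N -> gamma a k l = 0.
Proof.
elim/ltn_ind: k l => -[|[|k]] IH [|l] //= Hkl.
- exact: gamma_0l.
- case: l Hkl => // l _; by rewrite gamma_rec1 gamma_0l mulr0.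
- rewrite gamma_rec !IH ?mulr0 ?addr0 //; lia.
Qed.

Definition E k : {poly int} := \poly_(j < k.+1) gamma a k j.
Definition Em k : {poly int} := \poly_(j < k.+1) ((-1) ^+ j * gamma a k j).

Lemma coefG k j : (E k)`_j = gamma a k j.
Proof. rewrite coef_poly; case: ltnP => // H; rewrite gamma_gt //. Qed.
Lemma coefGm k j : (Em k)`_j = (-1) ^+ j * gamma a k j.
Proof. rewrite coef_poly; case: ltnP => // H; rewrite gamma_gt ?mulr0 //. Qed.

Lemma E0 : E 0 = 1.
Proof. apply/polyP => -[|j]; rewrite coefG coefC ?gamma_l0 ?gamma_0l //. Qed.
Lemma Em0 : Em 0 = 1.
Proof. apply/polyP => -[|j]; rewrite coefGm coefC ?gamma_l0 ?gamma_0l ?mulr0 //. Qed.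

Lemma E1 : E 1 = E 0 + (a 1)%:P * 'X * E 0.
Proof.
apply/polyP => -[|j]; rewrite coefD -mulrA coefCM coefXM coefG ?coefG ?gamma_l0 //.
  by rewrite /= mulr0 addr0.
by rewrite /= gamma_rec1 gamma_0l add0r.
Qed.

Lemma Em1 : Em 1 = Em 0 - (a 1)%:P * 'X * Em 0.
Proof.
apply/polyP => -[|j]; rewrite coefB -mulrA coefCM coefXM coefGm ?coefGm ?gamma_l0 //=.
  by rewrite mulr0 subr0.
rewrite gamma_rec1 gamma_0l exprS; ring.
Qed.

Lemma Erec k : E k.+2 = E k + (a k.+2)%:P * 'X * E k.+1.
Proof.
apply/polyP => -[|j]; rewrite coefD -mulrA coefCM coefXM !coefG ?gamma_l0 /=.
  by rewrite mulr0 addr0.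
by rewrite gamma_rec addrC.
Qed.

Lemma Emrec k : Em k.+2 = Em k - (a k.+2)%:P * 'X * Em k.+1.
Proof.
apply/polyP => -[|j]; rewrite coefB -mulrA coefCM coefXM !coefGm ?gamma_l0 /=.
  by rewrite mulr0 subr0.
rewrite gamma_rec exprS; ring.
Qed.

Lemma Sinv k : E k.+1 * Em k + Em k.+1 * E k = 2%:P.
Proof.
elim: k => [|k IH].
  rewrite E1 Em1 E0 Em0 polyC_natr; ring.
rewrite Erec Emrec -IH; ring.
Qed.

Lemma sgn_sub (p j : nat) : (j <= p)%N -> (-1) ^+ p * (-1) ^+ (p - j) = (-1) ^+ j :> int.
Proof.
move=> H; rewrite -{1}(subnKC H) exprD -mulrA -exprD addnn -muln2 exprM sqrr_sign.
by rewrite mulr1.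
Qed.

Lemma flip A B p : (Em A * E B)`_p = (-1) ^+ p * (E A * Em B)`_p.
Proof.
rewrite coefM coefM mulr_sumr; apply: eq_bigr => -[j Hj] _ /=.
rewrite coefGm coefG coefG coefGm -(@sgn_sub p j Hj); ring.
Qed.

End P.


Section D.
Variable a : nat -> int.
Local Open Scope ring_scope.
Lemma oddE m : (m %% 2 = 1)%N -> odd m.
Proof. by rewrite modn2; case: (odd m). Qed.
Lemma evenE m : (m %% 2 = 0)%N -> ~~ odd m.
Proof. by rewrite modn2; case: (odd m). Qed.
Definition G n K p := (E a n * Em a K)`_p.

Lemma G_sym n p : odd p -> G n n p = 0.
Proof.
move=> Hp; have := flip a n n p; rewrite mulrC -signr_odd Hp expr1 -/(G n n p).
rewrite /G => H; lra.
Qed.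

Lemma G_n1 n p : ~~ odd p -> (0 < p)%N -> G n.+1 n p = 0.
Proof.
move=> Hp Hp0; have := congr1 (fun q : {poly int} => q`_p) (Sinv a n).
rewrite /= coefD coefC flip -signr_odd (negbTE Hp) expr0 mul1r.
rewrite (_ : (p == 0%N) = false); last by case: p Hp0 {Hp}.
rewrite /G => H; lra.
Qed.

Lemma G_rec n K p : G n K.+2 p.+1 = G n K p.+1 - a K.+2 * G n K.+1 p.
Proof.
by rewrite /G Emrec mulrBr coefB -!mulrA mulrCA coefCM mulrCA coefXM.
Qed.

Lemma G_rec1 n p : G n 1 p.+1 = G n 0 p.+1 - a 1 * G n 0 p.
Proof.
by rewrite /G Em1 mulrBr coefB -!mulrA mulrCA coefCM mulrCA coefXM.
Qed.

Lemma G0 n p : G n 0 p = gamma a n p.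
Proof. by rewrite /G Em0 mulr1 coefG. Qed.

Lemma Gzero n : ~~ odd n -> forall p, (0 < p)%N -> forall K,
  (n - p + 1 <= K <= n)%N -> odd (K + p) -> G n K p = 0.
Proof.
move=> Hn; elim=> [//|p IHp] _.
suff H : forall d K, (n - K = d)%N -> (n - p.+1 + 1 <= K <= n)%N -> odd (K + p.+1) -> G n K p.+1 = 0.
  by move=> K HK; apply: (H (n - K)%N).
elim/ltn_ind => d IHd K Hd /andP[H1 H2] Ho.
have Hn2 : (n %% 2 = 0)%N by rewrite modn2 (negbTE Hn).
have Ho2 : ((K + p.+1) %% 2 = 1)%N by rewrite modn2 Ho.
case: d IHd Hd => [|[|d]] IHd Hd.
- have -> : K = n by lia.
  apply: G_sym; apply: oddE; lia.
- case: n Hn Hn2 H1 H2 Hd IHp IHd => [|n] Hn Hn2 H1 H2 Hd IHp IHd; first lia.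
  have -> : K = n by lia.
  apply: G_n1 => //; apply: evenE; lia.
- have := G_rec n K p; rewrite (IHd d) //; try lia.
  clear IHd; case: p IHp H1 Ho Ho2 => [|p] IHp H1 Ho Ho2; first lia.
  rewrite IHp //; try lia.
Qed.
End D.


Lemma Gamma_G (a : nat -> int) n K p :
  (\sum_(0 <= j < (minn p K).+1) (-1) ^+ j * gamma a n (p - j) * gamma a K j)%R = G a n K p.
Proof.
rewrite /G coefMr -(big_mkord xpredT (fun j => (E a n)`_(p - j) * (Em a K)`_j)%R).
rewrite [RHS](big_cat_nat _ (n := (minn p K).+1)) //=; last by lia.
rewrite [X in _ = (_ + X)%R]big1_seq ?addr0; last first.
  move=> j /andP[_]; rewrite mem_index_iota => /andP[H1 H2].
  rewrite coefGm gamma_gt ?mulr0 //; lia.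
by apply: eq_bigr => j _; rewrite coefG coefGm; ring.
Qed.

Unset Implicit Arguments.
Theorem lemma3 (n : nat) (a : nat -> int) (m l r0 : nat) :
  (0 < n)%N -> ~~ odd n ->
  (forall t, (1 <= t <= n)%N -> (0 < a t)%R) ->
  (1 <= m <= n)%N -> m = (2 * l + r0)%N -> (r0 <= 1)%N ->
  gamma a n m =
  (\sum_(r0 <= i < ((n - m + r0) %/ 2).+1)
     a (2 * i + 1 - r0)%N * Gamma a n m r0 i)%R.
Proof.
move=> Hn0 Hn _ /andP[Hm1 Hmn] Hml Hr.
have [p Hp] : exists p, m = p.+1 by exists m.-1; lia.
rewrite Hp in Hml Hmn *; clear Hp Hm1 m.
have Hn2 : (n %% 2 = 0)%N by rewrite modn2 (negbTE Hn).
set N := ((n - p.+1 + r0) %/ 2)%N.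
have HN : (2 * N = n - p.+1 + r0)%N by rewrite /N; lia.
have Tel : forall d, (r0 + d <= N)%N -> gamma a n p.+1 =
   (\sum_(r0 <= i < (r0 + d).+1) a (2 * i + 1 - r0)%N * G a n (2 * i - r0) p
     + G a n (2 * (r0 + d) + 1 - r0) p.+1)%R.
  elim=> [|d IH] Hd.
    rewrite addn0 big_nat1.
    have [->|->] : (r0 = 0 \/ r0 = 1)%N by lia.
      rewrite G_rec1 !G0; ring.
    change (2 * 1 + 1 - 1)%N with 2%N; change (2 * 1 - 1)%N with 1%N.
    rewrite (G_rec a n 0) !G0; ring.
  rewrite addnS big_nat_recr /=; last by lia.
  rewrite IH; last by lia.
  set K := (2 * (r0 + d) + 1 - r0)%N.
  rewrite (_ : (2 * (r0 + d).+1 + 1 - r0 = K.+2)%N); last by rewrite /K; lia.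
  rewrite (_ : (2 * (r0 + d).+1 - r0 = K.+1)%N); last by rewrite /K; lia.
  rewrite G_rec; ring.
rewrite (Tel (N - r0)%N); last by lia.
rewrite (_ : (r0 + (N - r0) = N)%N); last by lia.
rewrite (@Gzero a n Hn p.+1) // ?addr0; first last.
- apply: oddE; lia.
- lia.
- by apply: eq_bigr => i _; rewrite /Gamma subn1 Gamma_G.
Qed.
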